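(* For every cake instance (i.e., $m=0$), the allocation returned by Generalized MES satisfies cake EJR.
   Context: Model: There is a set of agents $N=\{1,\dots,n\}$. The resource $R$ consists of a cake $C=[0,c]$ for a real $c\ge 0$ and a set of indivisible goods $G=\{g_1,\dots,g_m\}$ for an integer $m\ge 0$, with $\max(c,m)>0$. A piece of cake is a union of finitely many disjoint closed subintervals of $C$; its length $\ell(\cdot)$ is the sum of the lengths of its intervals. A bundle $R'=(C',G')$ consists of a piece of cake $C'\subseteq C$ and a set $G'\subseteq G$; its size is $s(R')=\ell(C')+|G'|$. Each agent $i$ approves a bundle $R_i=(C_i,G_i)$, and her utility for a bundle $R'$ is $u_i(R')=\ell(C_i\cap C')+|G_i\cap G'|$. A parameter $\alpha\in(0,c+m]$ is given; an allocation is a bundle $A$ with $s(A)\le\alpha$. A cake instance is one with $m=0$. For a real $t>0$, $N^*\subseteq N$ is $t$-cohesive if $|N^*|\ge t n/\alpha$ and $s(\bigcap_{i\in N^*}R_i)\ge t$. Cake EJR: an allocation $A$ satisfies cake EJR if for every real $t>0$ and every $t$-cohesive group $N^*$, some $j\in N^*$ has $u_j(A)\ge t$. Generalized MES (Method of Equal Shares): Step 1: set $R'=(C',G')=(\emptyset,\emptyset)$ and budgets $b_i=\alpha/n$ for all $i$; agents still present are ''remaining''. Step 2: divide the remaining cake into intervals $I_1,\dots,I_k$ such that each agent approves each interval entirely or not at all. For an interval $I_j=[x_0,x_1]$, $x\in(x_0,x_1]$ and $\rho\ge 0$, $I_j$ is $(x,\rho)$-affordable if $\sum_{i\in N_{I_j}}\min(b_i,(x-x_0)\rho)=x-x_0$,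 where $N_{I_j}$ is the set of remaining agents approving $I_j$. A remaining good $g$ is $\rho$-affordable if $\sum_{i\in N_g}\min(b_i,\rho)=1$, where $N_g$ is the set of remaining agents approving $g$. Step 3: if no $\rho$-affordable good and no $(x,\rho)$-affordable piece of cake exists for any $\rho$, return $R'$. Otherwise take either an interval $I_j$ with the smallest $\rho$ together with the largest $x$ such that $I_j$ is $(x,\rho)$-affordable, or a good $g$ with the smallest $\rho$ such that $g$ is $\rho$-affordable, whichever has smaller $\rho$. In the first case deduct $\min(b_i,(x-x_0)\rho)$ from $b_i$ for each $i\in N_{I_j}$, remove $[x_0,x]$ from the remaining cake and add it to $C'$; in the second case deduct $\min(b_i,\rho)$ from $b_i$ for each $i\in N_g$, remove $g$ from the remaining goods and add it to $G'$. Remove all agents with zero budget and go to Step 2. *)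

(* Defs.v *)
From HB Require Import structures.
From mathcomp Require Import all_boot all_order all_algebra.
From mathcomp Require Import all_classical all_reals all_analysis.
Set Implicit Arguments. Unset Strict Implicit. Unset Printing Implicit Defensive.
Import Order.TTheory GRing.Theory Num.Theory.
Local Open Scope classical_set_scope.
Local Open Scope ring_scope.

Definition len {R : realType} (S : set R) : R := fine (lebesgue_measure S).

Definition cint {R : realType} (a b : R) : set R := [set x | a <= x <= b].

Definition is_piece {R : realType} (c : R) (P : set R) : Prop :=
  exists s : seq (R * R),
    (forall p, p \in s -> [&& 0 <= p.1, p.1 <= p.2 & p.2 <= c]) /\
    (forall i j : nat, (i < j < size s)%N ->
        cint (nth (0,0) s i).1 (nth (0,0) s i).2
        `&` cint (nth (0,0) s j).1 (nth (0,0) s j).2 = set0) /\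
    P = [set x | exists2 p, p \in s & cint p.1 p.2 x].

Definition in_NI {R : realType} {n : nat} (C : 'I_n -> set R) (b : 'I_n -> R)
  (a0 a1 : R) (i : 'I_n) : bool :=
  `[< 0 < b i /\ cint a0 a1 `<=` C i >].

Definition affordable {R : realType} {n : nat} (C : 'I_n -> set R)
  (b : 'I_n -> R) (a0 a1 x rho : R) : Prop :=
  a0 < x <= a1 /\ 0 <= rho /\
  \sum_(i | in_NI C b a0 a1 i) Num.min (b i) ((x - a0) * rho) = x - a0.

Definition valid_division {R : realType} {n : nat} (c : R) (C : 'I_n -> set R)
  (Cp : set R) (D : seq (R * R)) : Prop :=
  (forall p, p \in D ->
     [/\ 0 <= p.1, p.1 < p.2, p.2 <= c,
         len (cint p.1 p.2 `&` Cp) = 0 &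
         forall i : 'I_n, cint p.1 p.2 `<=` C i \/ len (cint p.1 p.2 `&` C i) = 0]) /\
  (forall i j : nat, (i < j < size D)%N ->
     len (cint (nth (0,0) D i).1 (nth (0,0) D i).2
          `&` cint (nth (0,0) D j).1 (nth (0,0) D j).2) = 0) /\
  len ((cint 0 c `\` Cp) `\` [set x | exists2 p, p \in D & cint p.1 p.2 x]) = 0.

(* State of Generalized MES on a cake instance: selected cake and budgets. *)
Definition mes_state (R : realType) (n : nat) : Type := (set R * ('I_n -> R))%type.

(* One iteration of Steps 2-3 (cake case, no goods). *)
Definition mes_step {R : realType} {n : nat} (c : R) (C : 'I_n -> set R)
  (s s' : mes_state R n) : Prop :=
  let: (Cp, b) := s in
  exists D : seq (R * R), valid_division c C Cp D /\
  exists p, p \in D /\ exists x rho : R,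
    [/\ affordable C b p.1 p.2 x rho,
        (forall q x' rho', q \in D -> affordable C b q.1 q.2 x' rho' -> rho <= rho'),
        (forall x', affordable C b p.1 p.2 x' rho -> x' <= x) &
        s' = (Cp `|` cint p.1 x,
              fun i => if in_NI C b p.1 p.2 i
                       then b i - Num.min (b i) ((x - p.1) * rho) else b i)].

Definition mes_final {R : realType} {n : nat} (c : R) (C : 'I_n -> set R)
  (s : mes_state R n) : Prop :=
  exists D : seq (R * R), valid_division c C s.1 D /\
    forall q x rho, q \in D -> ~ affordable C s.2 q.1 q.2 x rho.

Inductive mes_reach {R : realType} {n : nat} (c : R) (C : 'I_n -> set R) :
  mes_state R n -> mes_state R n -> Prop :=
| mes_refl s : mes_reach c C s s
| mes_next s s' s'' : mes_step c C s s' -> mes_reach c C s' s'' -> mes_reach c C s s''.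

Definition mes_outcome {R : realType} {n : nat} (c alpha : R) (C : 'I_n -> set R)
  (A : set R) : Prop :=
  exists b, mes_reach c C (set0, fun _ => alpha / n%:R) (A, b)
            /\ mes_final c C (A, b).

(* t-cohesive group (cake instance: size of a bundle is its length). *)
Definition t_cohesive {R : realType} {n : nat} (alpha : R) (C : 'I_n -> set R)
  (t : R) (Ns : {set 'I_n}) : Prop :=
  t * n%:R / alpha <= #|Ns|%:R /\
  t <= len [set x | forall i, i \in Ns -> C i x].

Definition cake_EJR {R : realType} {n : nat} (alpha : R) (C : 'I_n -> set R)
  (A : set R) : Prop :=
  forall (t : R), 0 < t -> forall Ns : {set 'I_n}, t_cohesive alpha C t Ns ->
    exists2 j, j \in Ns & t <= len (C j `&` A).

(* Main.v *)
Require Import Defs.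
From HB Require Import structures.
From mathcomp Require Import all_boot all_order all_algebra.
From mathcomp Require Import all_classical all_reals all_analysis.
From mathcomp Require Import lra.
Import Order.TTheory GRing.Theory Num.Theory.
Local Open Scope classical_set_scope.
Local Open Scope ring_scope.



Section Tk.
Variable R : realType.
Implicit Types a b : R.

Lemma cint_itv a b : cint a b = [set` `[a, b]].
Proof. by apply/seteqP; split => x /=; rewrite in_itv. Qed.

Lemma mcint a b : measurable (cint a b).
Proof. rewrite cint_itv; exact: measurable_itv. Qed.

Lemma mu_cint a b : a <= b -> lebesgue_measure (cint a b) = (b - a)%:E.
Proof.
move=> ab; rewrite cint_itv lebesgue_measure_itv /= lte_fin.
have [ab'|] := ltP a b; first by rewrite EFinB.
move=> ba; have -> : a = b by apply/eqP; rewrite eq_le ab ba.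
by rewrite subrr.
Qed.

Lemma len_cint a b : a <= b -> len (cint a b) = b - a.
Proof. by move=> ab; rewrite /len mu_cint. Qed.

Lemma mu_fin {c : R} {S : set R} : 0 <= c -> measurable S -> S `<=` cint 0 c ->
  lebesgue_measure S = (len S)%:E.
Proof.
move=> c0 mS Sc; rewrite /len fineK //.
rewrite ge0_fin_numE ?measure_ge0 //.
apply: (@le_lt_trans _ _ (lebesgue_measure (cint 0 c))).
  by apply: le_measure => //; rewrite inE //; exact: mcint.
by rewrite mu_cint // ltry.
Qed.

Lemma len_ge0 (S : set R) : 0 <= len S.
Proof. by rewrite /len fine_ge0 // measure_ge0. Qed.

Variable c : R.
Hypothesis c0 : 0 <= c.

Lemma len_le (A B : set R) : measurable A -> measurable B -> B `<=` cint 0 c ->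
  A `<=` B -> len A <= len B.
Proof.
move=> mA mB Bc AB.
have Ac : A `<=` cint 0 c by move=> x /AB /Bc.
rewrite -lee_fin -(mu_fin c0 mA Ac) -(mu_fin c0 mB Bc).
by apply: le_measure => //; rewrite inE.
Qed.

Lemma len_DI (A B : set R) : measurable A -> measurable B -> A `<=` cint 0 c ->
  len A = len (A `\` B) + len (A `&` B).
Proof.
move=> mA mB Ac; apply/eqP; rewrite -eqe EFinD.
rewrite -(mu_fin c0 mA Ac) -(mu_fin c0 (measurableD mA mB)); last by move=> x [/Ac].
rewrite -(mu_fin c0 (measurableI _ _ mA mB)); last by move=> x [/Ac].
by rewrite -measureDI.
Qed.

Lemma len_U2 (A B : set R) : measurable A -> measurable B -> A `<=` cint 0 c ->
  B `<=` cint 0 c -> len (A `|` B) <= len A + len B.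
Proof.
move=> mA mB Ac Bc; rewrite -lee_fin EFinD.
rewrite -(mu_fin c0 mA Ac) -(mu_fin c0 mB Bc) -(mu_fin c0 (measurableU _ _ mA mB)).
  exact: measureU2.
by move=> x [/Ac|/Bc].
Qed.

Lemma mU (s : seq (R * R)) : measurable [set x | exists2 p, p \in s & cint p.1 p.2 x].
Proof.
elim: s => [|p s IH].
  by rewrite (_ : [set x | _] = set0) //; apply/seteqP; split => x //= [].
rewrite (_ : [set x | _] = cint p.1 p.2 `|` [set x | exists2 p, p \in s & cint p.1 p.2 x]).
  exact: measurableU (mcint _ _) IH.
apply/seteqP; split => x /=.
  by move=> [q]; rewrite inE => /orP [/eqP -> |qs] h; [left|right; exists q].
by move=> [h|[q qs h]]; [exists p; rewrite ?inE ?eqxx|exists q; rewrite ?inE ?qs ?orbT].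
Qed.

Lemma piece_meas (P : set R) : is_piece c P -> measurable P /\ P `<=` cint 0 c.
Proof.
move=> [s [hs [_ ->]]]; split; first exact: mU.
move=> x [p /hs /and3P [h1 h2 h3]] /= /andP [x1 x2].
by rewrite /cint /= (le_trans h1 x1) (le_trans x2 h3).
Qed.
End Tk.
Arguments len_le {R c}.
Arguments len_DI {R c}.
Arguments len_U2 {R c}.
Arguments piece_meas {R c}.
Arguments len_cint {R}.
Arguments mu_cint {R}.
Arguments mcint {R}.
Arguments mU {R}.
Arguments len_ge0 {R}.



Section T2.
Variable R : realType.

Lemma afford (n : nat) (C : 'I_n -> set R) (b : 'I_n -> R) (q : R * R) (Ns : {set 'I_n}) :
  q.1 < q.2 -> (forall i, i \in Ns -> cint q.1 q.2 `<=` C i /\ 0 < b i) ->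
  (exists j, j \in Ns) ->
  exists x rho, affordable C b q.1 q.2 x rho /\ rho <= #|Ns|%:R^-1.
Proof.
move=> q12 hN [j jN].
pose P := in_NI C b q.1 q.2.
have PN : forall i, i \in Ns -> P i.
  move=> i /hN [h1 h2]; rewrite /P /in_NI; apply/asboolP; split => //.
pose m := #|[pred i | P i]|.
have Nm : (#|Ns| <= m)%N.
  by apply: subset_leq_card; apply/fintype.subsetP => i /PN.
have m0 : (0 < m)%N.
  by apply: leq_trans Nm; apply/card_gt0P; exists j.
have m0R : 0 < m%:R :> R by rewrite ltr0n.
pose Y := \big[Num.min/(q.2 - q.1)]_(i | P i) b i.
have Y0 : 0 < Y.
  rewrite /Y; apply: (big_ind (fun v => 0 < v)).
  - by rewrite subr_gt0 q12.
  - by move=> u v u0 v0; rewrite lt_min u0 v0.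
  - by move=> i; rewrite /P /in_NI => /asboolP [].
have Yb : forall i, P i -> Y <= b i.
  by move=> i Pi; rewrite /Y (bigD1 i) //= ge_min lexx.
pose y := Num.min (q.2 - q.1) Y.
have y0 : 0 < y by rewrite lt_min subr_gt0 q12 Y0.
have yq : y <= q.2 - q.1 by rewrite ge_min lexx.
have yb : forall i, P i -> y <= b i.
  by move=> i Pi; rewrite ge_min (Yb i Pi) orbT.
exists (q.1 + y), (m%:R^-1); split; last first.
  rewrite lef_pV2 ?posrE ?ltr0n // ?ler_nat //.
  by apply/card_gt0P; exists j.
split; first by rewrite ltrDl y0 -lerBrDl.
split; first by rewrite invr_ge0 ler0n.
rewrite addrAC subrr add0r.
rewrite (eq_bigr (fun _ => y / m%:R)); last first.
  move=> i Pi; apply/min_idPr.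
  apply: le_trans (yb i Pi); rewrite ler_pdivrMr // ler_peMr ?ler1n //.
  exact: ltW.
rewrite sumr_const (_ : #|_| = m) // -[_ *+ m](mulr_natr (y / m%:R)) divfK //.
by rewrite gt_eqF.
Qed.
End T2.



Section T3.
Variable R : realType.
Variable c : R.
Hypothesis c0 : 0 <= c.

Lemma cover0 (D : seq (R * R)) (K : set R) : measurable K -> K `<=` cint 0 c ->
  (forall p, p \in D -> len (cint p.1 p.2 `&` K) = 0) ->
  len ([set x | exists2 p, p \in D & cint p.1 p.2 x] `&` K) = 0.
Proof.
move=> mK Kc; elim: D => [|p D IH] h.
  rewrite (_ : _ `&` _ = set0) /len ?measure0 //.
  by apply/seteqP; split => x // [[]].
rewrite (_ : _ `&` _ = (cint p.1 p.2 `&` K) `|` ([set x | exists2 p, p \in D & cint p.1 p.2 x] `&` K)).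
  apply/eqP; rewrite eq_le len_ge0 andbT.
  apply: le_trans (len_U2 c0 _ _ _ _ _ _) _.
  - exact: measurableI _ _ (mcint _ _) mK.
  - exact: measurableI _ _ (mU _) mK.
  - by move=> x [_ /Kc].
  - by move=> x [_ /Kc].
  by rewrite h ?inE ?eqxx // IH ?addr0 // => q qD; apply: h; rewrite inE qD orbT.
apply/seteqP; split => x /=.
  move=> [[q]]; rewrite inE => /orP [/eqP -> |qs] hx Kx; [left|right] => //.
  by split => //; exists q.
move=> [[hx Kx]|[[q qs hx] Kx]]; split => //; first by exists p; rewrite ?inE ?eqxx.
by exists q; rewrite ?inE ?qs ?orbT.
Qed.

Lemma exists_q n (C : 'I_n -> set R) (Cp K : set R) (D : seq (R * R)) :
  measurable Cp -> Cp `<=` cint 0 c -> measurable K -> K `<=` cint 0 c ->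
  0 < len (K `\` Cp) -> valid_division c C Cp D ->
  exists2 q, q \in D & 0 < len (cint q.1 q.2 `&` K).
Proof.
move=> mCp Cpc mK Kc Kpos [hD [_ hcov]].
case: (pselect (exists2 q, q \in D & 0 < len (cint q.1 q.2 `&` K))) => // hne.
exfalso.
suff : len (K `\` Cp) <= 0 by rewrite leNgt Kpos.
have h0 : forall p, p \in D -> len (cint p.1 p.2 `&` K) = 0.
  move=> p pD; apply/eqP; rewrite eq_le len_ge0 andbT leNgt.
  by apply/negP => hp; apply: hne; exists p.
set U := [set x | exists2 p, p \in D & cint p.1 p.2 x].
have mU' : measurable U by exact: mU.
have m0c : measurable (cint 0 c) by exact: mcint.
have mE1 : measurable ((cint 0 c `\` Cp) `\` U).
  by apply: measurableD => //; apply: measurableD.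
have mE2 : measurable (U `&` K) by apply: measurableI.
have sub : K `\` Cp `<=` ((cint 0 c `\` Cp) `\` U) `|` (U `&` K).
  move=> x [Kx nCx]; case: (pselect (U x)) => Ux; [right|left] => //.
  by split => //; split => //; apply: Kc.
apply: le_trans (len_le c0 _ _ _ _ _ sub) _.
- by apply: measurableD.
- by apply: measurableU.
- by move=> x [[[]]|[_ /Kc]].
apply: le_trans (len_U2 c0 _ _ _ _ _ _) _ => //.
- by move=> x [[]].
- by move=> x [_ /Kc].
by rewrite hcov (cover0 _ _ mK Kc h0) addr0.
Qed.
End T3.



Lemma reach_meas (R : realType) (n : nat) (c : R) (C : 'I_n -> set R) s s' :
  0 <= c -> mes_reach c C s s' -> measurable s.1 -> s.1 `<=` cint 0 c ->
  [/\ measurable s'.1, s'.1 `<=` cint 0 c & s.1 `<=` s'.1].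
Proof.
move=> c0; elim => [s0 m0 sc0|s0 s1 s2 st r IH m0 sc0]; first by split.
move: st; case: s0 m0 sc0 => Cp b /= mCp Cpc [D [[hD _] [p [pD [x [rho [[/andP [x1 x2] _] _ _ e]]]]]]]; subst s1.
have [p0 p1 p2 _ _] := hD p pD.
have [] := IH.
- exact: measurableU mCp (mcint _ _).
- move=> y [/Cpc //|/= /andP [y1 y2]].
  by rewrite /cint /= (le_trans p0 y1) (le_trans y2 (le_trans x2 p2)).
move=> m2 s2c sub; split => // y hy; apply: sub; by left.
Qed.

Arguments reach_meas {R n c C s s'}.

Arguments exists_q {R c} c0 {n C Cp K D}.
Arguments afford {R n C b q Ns}.

Theorem mainTheorem8 (R : realType) (n : nat) (c alpha : R) (C : 'I_n -> set R)
  (A : set R) :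
  (0 < n)%N -> 0 < c -> 0 < alpha -> alpha <= c ->
  (forall i, is_piece c (C i)) ->
  mes_outcome c alpha C A ->
  cake_EJR alpha C A.
Proof.
move=> n0 cpos al0 alc Cpiece [bf [hreach hfin]] t t0 Ns [hcoh hK].
have c0 : 0 <= c by exact: ltW.
have mC i : measurable (C i) by case: (piece_meas _ (Cpiece i)).
have Cc i : C i `<=` cint 0 c by case: (piece_meas _ (Cpiece i)).
have [mA Ac _] := reach_meas c0 hreach measurable0 (fun x (h : set0 x) => match h with end).
case: (pselect (exists2 j, j \in Ns & t <= len (C j `&` A))) => // hne; exfalso.
have hlt : forall j, j \in Ns -> len (C j `&` A) < t.
  by move=> j jN; rewrite ltNge; apply/negP => h; apply: hne; exists j.
have Npos : (0 < #|Ns|)%N.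
  rewrite -(ltr0n R); apply: lt_le_trans hcoh.
  by rewrite divr_gt0 // mulr_gt0 // ltr0n.
have [j jN] : exists j, j \in Ns by move/card_gt0P: Npos => [j jN]; exists j.
pose k : R := #|Ns|%:R^-1.
have k0 : 0 < k by rewrite invr_gt0 ltr0n.
pose K := [set x | forall i, i \in Ns -> C i x].
have mK : measurable K.
  have -> : K = \bigcap_(i in [set i | i \in Ns]) C i by [].
  by apply: fin_bigcap_measurable; [exact: finite_finset| move=> i _; apply: mC].
have Kc : K `<=` cint 0 c by move=> x /(_ j jN) /Cc.
have key : forall (Cp : set R) (b : 'I_n -> R) D, measurable Cp -> Cp `<=` A ->
    (forall i, i \in Ns -> k * (t - len (C i `&` Cp)) <= b i) ->
    valid_division c C Cp D ->
    exists2 q, q \in D & exists x rho, affordable C b q.1 q.2 x rho /\ rho <= k.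
  move=> Cp b D mCp CpA hinv vd.
  have Cpc : Cp `<=` cint 0 c by move=> x /CpA /Ac.
  have ult : forall i, i \in Ns -> len (C i `&` Cp) < t.
    move=> i iN; apply: le_lt_trans (hlt i iN).
    apply: (len_le c0) => //; first exact: measurableI.
    - exact: measurableI.
    - by move=> x [/Cc].
    - by move=> x [Cx /CpA].
  have bpos : forall i, i \in Ns -> 0 < b i.
    move=> i iN; apply: lt_le_trans (hinv i iN).
    by rewrite mulr_gt0 // subr_gt0 ult.
  have KCp : 0 < len (K `\` Cp).
    have := len_DI c0 _ Cp mK mCp Kc.
    have : len (K `&` Cp) <= len (C j `&` Cp).
      apply: (len_le c0) => //; first exact: measurableI.
      - exact: measurableI.
      - by move=> x [/Cc].
      - by move=> x [Kx Cx]; split => //; apply: Kx.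
    have := ult j jN.
    move=> h1 h2 h3; rewrite -subr_gt0.
    have : len (K `\` Cp) = len K - len (K `&` Cp) by rewrite h3 addrK.
    move=> ->; lra.
  have [q qD qpos] := exists_q c0 mCp Cpc mK Kc KCp vd.
  exists q => //.
  case: vd => [hD _]; have [q0 q12 q2 _ hq] := hD q qD.
  have hN : forall i, i \in Ns -> cint q.1 q.2 `<=` C i /\ 0 < b i.
    move=> i iN; split; last exact: bpos.
    case: (hq i) => // h0; exfalso.
    suff : len (cint q.1 q.2 `&` K) <= 0 by rewrite leNgt qpos.
    rewrite -h0; apply: (len_le c0).
    - exact: measurableI _ _ (mcint _ _) mK.
    - exact: measurableI _ _ (mcint _ _) (mC i).
    - by move=> y [_ /Cc].
    - by move=> y [qy Ky]; split => //; apply: Ky.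
  have [x [rho [af rk]]] := @afford _ _ C b q Ns q12 hN (ex_intro _ j jN).
  by exists x, rho.
have main : forall s s'', mes_reach c C s s'' -> s'' = (A, bf) -> measurable s.1 ->
    s.1 `<=` A -> (forall i, i \in Ns -> k * (t - len (C i `&` s.1)) <= s.2 i) -> False.
  move=> s s'' r; elim: r => [s0 e m0 s0A inv | s0 s1 s2 st r IH e m0 s0A inv].
    subst s0; case: hfin => D [vd hno].
    have [q qD [x [rho [af _]]]] := key A bf D mA (fun x h => h) inv vd.
    exact: hno q x rho qD af.
  case: s0 st m0 s0A inv => Cp b st mCp CpA inv /=.
  case: st => D [vd [p [pD [x [rho [af minr maxx e1]]]]]]; subst s1.
  have [q qD [x' [rho' [af' rk]]]] := key Cp b D mCp CpA inv vd.
  have rhok : rho <= k := le_trans (minr q x' rho' qD af') rk.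
  have Cpc : Cp `<=` cint 0 c by move=> z /CpA /Ac.
  have [hD _] := vd; have [p0 p12 p2 hcap _] := hD p pD.
  case: (af) => /andP [px xp] [rho0 _].
  have mP : measurable (cint p.1 x) by exact: mcint.
  have Pc : cint p.1 x `<=` cint 0 c.
    move=> z /andP [z1 z2]; rewrite /cint /= (le_trans p0 z1) (le_trans z2 (le_trans xp p2)) //.
  have mN : measurable (Cp `|` cint p.1 x) by exact: measurableU.
  have Nc : Cp `|` cint p.1 x `<=` cint 0 c by move=> z [/Cpc|/Pc].
  have [mN' Nc' NA] := reach_meas c0 r mN Nc.
  rewrite e in NA.
  apply: IH => //= i iN.
  set u := len (C i `&` Cp); set u' := len (C i `&` (Cp `|` cint p.1 x)).
  have mF : measurable (C i `&` (Cp `|` cint p.1 x)) by exact: measurableI.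
  have Fc : C i `&` (Cp `|` cint p.1 x) `<=` cint 0 c by move=> z [/Cc].
  have uu : u <= u'.
    apply: (len_le c0) => //; first exact: measurableI.
    by move=> z [Cz Cpz]; split => //; left.
  have hi := inv i iN; rewrite /= -/u in hi.
  have kt : k * (t - u') <= k * (t - u) by apply: ler_wpM2l; [exact: ltW | lra].
  case: ifP => hin; last exact: le_trans hi.
  move: (hin); rewrite /in_NI => /asboolP [_ pC].
  have uy : u + (x - p.1) <= u'.
    have h1 := len_DI c0 _ Cp mF mCp Fc.
    have h2 : u <= len ((C i `&` (Cp `|` cint p.1 x)) `&` Cp).
      apply: (len_le c0) => //; first exact: measurableI.
      - exact: measurableI.
      - by move=> z [/Fc].
      - by move=> z [Cz Cpz]; split => //; split => //; left.
    have h3 : len (cint p.1 x `\` Cp) <= len ((C i `&` (Cp `|` cint p.1 x)) `\` Cp).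
      apply: (len_le c0) => //; first exact: measurableD.
      - exact: measurableD.
      - by move=> z [/Fc].
      - move=> z [Pz nz]; split => //; split; last by right.
        apply: pC; case/andP: Pz => z1 z2; rewrite /cint /= z1 (le_trans z2 xp) //.
    have h4 := len_DI c0 _ Cp mP mCp Pc.
    have h5 : len (cint p.1 x `&` Cp) <= 0.
      rewrite -hcap; apply: (len_le c0) => //; first exact: measurableI.
      - exact: measurableI _ _ (mcint _ _) mCp.
      - by move=> z [_ /Cpc].
      - move=> z [/andP [z1 z2] Cz]; split => //; rewrite /cint /= z1 (le_trans z2 xp) //.
    have h6 : len (cint p.1 x) = x - p.1 by rewrite len_cint // ltW.
    have h7 := len_ge0 (cint p.1 x `&` Cp).
    rewrite /u' h1; lra.
  have kt2 : k * (t - u') <= k * (t - (u + (x - p.1))) by apply: ler_wpM2l; [exact: ltW | lra].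
  have my : Num.min (b i) ((x - p.1) * rho) <= (x - p.1) * k.
    by rewrite ge_min ler_wpM2l ?orbT // subr_ge0 ltW.
  have e2 : k * (t - (u + (x - p.1))) = k * (t - u) - (x - p.1) * k.
    by rewrite [_ * k]mulrC mulrBr mulrBr mulrDr; lra.
  move: kt2 my hi; rewrite e2.
  move: (k * (t - u')) (k * (t - u)) (Num.min (b i) ((x - p.1) * rho)) ((x - p.1) * k) (b i).
  move=> a1 a3 mm bb bi; lra.
apply: (main _ _ hreach erefl measurable0 (fun x (h : set0 x) => match h with end)).
move=> i iN /=; rewrite setI0 /len measure0 /= subr0.
have h := hcoh; rewrite ler_pdivrMr // in h.
have n0R : 0 < n%:R :> R by rewrite ltr0n.
rewrite /k mulrC ler_pdivrMr ?ltr0n // mulrAC ler_pdivlMr // [alpha * _]mulrC.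
exact: h.
Qed.
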